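(* Assume the setting below, $\mu_+(\max\{\lambda,1\})\le1$, and (A1), (A4), (A5), (A6). Let $r$ be an equilibrium solution (not necessarily regular) with $r(1)=\lambda$. Then $r'(\rho)\le\alpha_1(\rho,r(\rho))\tau(\rho)$ for all $\rho\in(0,1]$. Furthermore, if there is $\rho_0\in(0,1]$ with $r'(\rho_0)<\alpha_0(\rho_0,r(\rho_0))\tau(\rho_0)$, then $r(0)>0$.
   Context: Setting: $n\ge2$; $\kappa$ continuous on $[0,\infty)$, $\kappa_\pm=\max\{\pm\kappa,0\}$, $\mu_\pm(\lambda)=\int_0^\lambda s\kappa_\pm(s)ds$; $f$ solves $f''+\kappa f=0$, $f(0)=0$, $f'(0)=1$; $\lambda>0$. Let $\phi,h:(0,\infty)\to\mathbb R$ and $\Phi(v_1,\dots,v_n)=\sum_i\phi(v_i)+h(v_1\cdots v_n)$. For $r$ on $(0,1]$, $\tau(\rho)=f(r(\rho))/f(\rho)$. An equilibrium solution with $r(1)=\lambda$ is $r\in C^1(0,1]$, twice differentiable on $(0,1)$, $r'>0$ on $(0,1]$, $r(0):=\lim_{\rho\to0^+}r(\rho)\ge0$, $r(1)=\lambda$, satisfying on $(0,1)$ $$f(\rho)\big[\phi''(r')+h''(r'\tau^{n-1})\tau^{2(n-1)}\big]r''=(n-1)\big[f'(r)\phi'(\tau)-f'(\rho)\phi'(r')\big]-(n-1)\big(f'(r)r'-f'(\rho)\tau\big)h''(r'\tau^{n-1})\,r'\tau^{2n-3};$$ regular means $r(0)=0$. (A1) $h$ is $C^2$ and strictly convex. (A4)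 $\phi:(0,\infty)\to(0,\infty)$ is $C^2$ and convex. (A5) $v\phi'(v)$ is increasing. (A6) there is $t_0\ge0$ with $\phi'(t_0)=0$; $q_1(s)=\sup_{v>t_0}\phi'(v)/\phi'(sv)$ ($s\ge1$), $q_0(s)=\inf_{v>t_0/s}\phi'(v)/\phi'(sv)$ ($s\in(0,1]$) satisfy $q_1\in C^1[1,\infty)$, $q_0\in C^1(0,1]$, $q_1(s)\to0$ as $s\to\infty$, $q_0(s)\to\infty$ as $s\to0^+$, $q_1'<0$, $q_0'<0$. $b_0(\rho)=\min_{[0,\rho]}f'$, $b_1(\rho)=\max_{[0,\rho]}f'$; $\alpha_1(\rho,s)=\max\{b_1(\rho)/b_0(s),q_1^{-1}(b_0(\rho)/b_1(s))\}$, $\alpha_0(\rho,s)=\min\{b_0(\rho)/b_1(s),q_0^{-1}(b_1(\rho)/b_0(s))\}$. *)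

(* Defs.v *)
From Stdlib Require Import Reals Lra.
Open Scope R_scope.

(* Derivative of g at x relative to the domain D (one-sided at endpoints of D):
   the difference quotient over points y of D, y <> x, tends to l. *)
Definition deriv_within (D : R -> Prop) (g : R -> R) (x l : R) : Prop :=
  forall eps, 0 < eps -> exists delta, 0 < delta /\
    forall y, D y -> y <> x -> Rabs (y - x) < delta ->
      Rabs ((g y - g x) / (y - x) - l) < eps.

Definition convex_pos (g : R -> R) : Prop :=
  forall x y t, 0 < x -> 0 < y -> 0 <= t <= 1 ->
    g (t * x + (1 - t) * y) <= t * g x + (1 - t) * g y.

Definition strictly_convex_pos (g : R -> R) : Prop :=
  forall x y t, 0 < x -> 0 < y -> x <> y -> 0 < t < 1 ->
    g (t * x + (1 - t) * y) < t * g x + (1 - t) * g y.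

Definition is_glb (E : R -> Prop) (m : R) : Prop :=
  (forall x, E x -> m <= x) /\ (forall b, (forall x, E x -> b <= x) -> b <= m).

Definition pos_R (x : R) : Prop := 0 < x.
Definition nonneg_R (x : R) : Prop := 0 <= x.

(* Main.v *)
Require Import Defs.
From Stdlib Require Import Reals Lra Lia Classical.
From Coquelicot Require Coquelicot.
Open Scope R_scope.


Definition cw (D : R -> Prop) (g : R -> R) (x : R) :=
  forall eps, 0 < eps -> exists d, 0 < d /\
    forall y, D y -> Rabs (y - x) < d -> Rabs (g y - g x) < eps.

Lemma cont_cw D g x : continuity_pt g x -> cw D g x.
Proof.
  intros H eps He. destruct (H eps He) as [a [Ha Hb]]. exists a; split; auto.
  intros y _ Hy. destruct (Req_dec y x) as [->|Hne].
  - unfold Rminus; rewrite Rplus_opp_r, Rabs_R0; auto.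
  - apply (Hb y). split; [split; [exact I| auto]| exact Hy].
Qed.

Lemma cw_cont g x : cw (fun _ => True) g x -> continuity_pt g x.
Proof.
  intros H eps He. destruct (H eps He) as [a [Ha Hb]]. exists a; split; auto.
  intros y [_ Hy]. apply Hb; auto.
Qed.

Lemma cw_sub (D D' : R -> Prop) g x : (forall y, D' y -> D y) -> cw D g x -> cw D' g x.
Proof.
  intros HD H eps He. destruct (H eps He) as [a [Ha Hb]]. exists a; split; auto.
Qed.

Lemma lim_cw D g x : limit1_in g D (g x) x -> cw D g x.
Proof.
  intros H eps He. destruct (H eps He) as [a [Ha Hb]]. exists a; split; auto.
  intros y Hy Hd. apply (Hb y). split; auto.
Qed.

Lemma dw_cw D g x l : deriv_within D g x l -> cw D g x.
Proof.
  intros H eps He.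
  destruct (H 1 Rlt_0_1) as [d [Hd Hq]].
  exists (Rmin d (eps / (Rabs l + 1))). split.
  { apply Rmin_pos; auto. apply Rdiv_lt_0_compat; auto. pose proof (Rabs_pos l); lra. }
  intros y Dy Hy. destruct (Req_dec y x) as [->|Hne].
  { unfold Rminus; rewrite Rplus_opp_r, Rabs_R0; auto. }
  assert (Hy1 : Rabs (y - x) < d) by (eapply Rlt_le_trans; [exact Hy| apply Rmin_l]).
  assert (Hy2 : Rabs (y - x) < eps / (Rabs l + 1)) by (eapply Rlt_le_trans; [exact Hy| apply Rmin_r]).
  specialize (Hq y Dy Hne Hy1).
  assert (Hyx : y - x <> 0) by lra.
  assert (Hq' : Rabs ((g y - g x) / (y - x)) < Rabs l + 1).
  { pose proof (Rabs_triang ((g y - g x) / (y - x) - l) l).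
    replace ((g y - g x) / (y - x) - l + l) with ((g y - g x) / (y - x)) in H0 by ring. lra. }
  replace (g y - g x) with ((g y - g x) / (y - x) * (y - x)) by (field; auto).
  rewrite Rabs_mult.
  assert (0 < Rabs l + 1) by (pose proof (Rabs_pos l); lra).
  apply Rle_lt_trans with ((Rabs l + 1) * Rabs (y - x)).
  { apply Rmult_le_compat_r; [apply Rabs_pos| lra]. }
  apply Rlt_le_trans with ((Rabs l + 1) * (eps / (Rabs l + 1))).
  { apply Rmult_lt_compat_l; auto. }
  right; field; lra.
Qed.

Lemma dw_int D g x l d0 : deriv_within D g x l -> 0 < d0 ->
  (forall y, Rabs (y - x) < d0 -> D y) -> derivable_pt_lim g x l.
Proof.
  intros H Hd0 HD eps He. destruct (H eps He) as [d [Hd Hq]].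
  assert (Hp : 0 < Rmin d d0) by (apply Rmin_pos; auto).
  exists (mkposreal _ Hp). intros h Hh Hhd. simpl in Hhd.
  pose proof (Rmin_l d d0); pose proof (Rmin_r d d0).
  assert (Hxh : x + h - x = h) by ring.
  pose proof (Hq (x + h)) as Hq'. rewrite Hxh in Hq'.
  apply Hq'.
  - apply HD. rewrite Hxh. lra.
  - lra.
  - lra.
Qed.

Lemma dpl_cont g x l : derivable_pt_lim g x l -> continuity_pt g x.
Proof. intros H. apply derivable_continuous_pt. exists l. exact H. Qed.

Lemma dpl_local g h x l d : 0 < d -> derivable_pt_lim g x l ->
  (forall y, Rabs (y - x) < d -> h y = g y) -> derivable_pt_lim h x l.
Proof.
  intros Hd H He eps Heps. destruct (H eps Heps) as [del Hdel].
  assert (Hp : 0 < Rmin del d) by (apply Rmin_pos; [apply cond_pos| auto]).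
  exists (mkposreal _ Hp). intros k Hk Hkd. simpl in Hkd.
  pose proof (Rmin_l del d); pose proof (Rmin_r del d).
  rewrite (He (x + k)), (He x).
  - apply Hdel; auto; lra.
  - unfold Rminus; rewrite Rplus_opp_r, Rabs_R0; auto.
  - replace (x + k - x) with k by ring; lra.
Qed.

Lemma cw_comp_cont D g k x d0 : 0 < d0 -> cw D g x ->
  (forall y, Rabs (y - x) < d0 -> D (k y)) -> k x = x ->
  (forall y, Rabs (k y - x) <= Rabs (y - x)) ->
  continuity_pt (fun y => g (k y)) x.
Proof.
  intros Hd0 H HD Hkx Hk eps He. destruct (H eps He) as [d [Hd Hb]].
  exists (Rmin d d0). split; [apply Rmin_pos; auto|].
  intros y [_ Hy]. simpl in *. unfold R_dist in *. rewrite Hkx.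
  pose proof (Rmin_l d d0); pose proof (Rmin_r d d0).
  apply Hb.
  - apply HD; lra.
  - specialize (Hk y); lra.
Qed.

Lemma cont_comp_cw D g k x : continuity_pt (fun y => g (k y)) x ->
  (forall y, D y -> k y = y) -> D x -> cw D g x.
Proof.
  intros H Hk Dx eps He. destruct (H eps He) as [a [Ha Hb]]. exists a; split; auto.
  intros y Dy Hy. destruct (Req_dec y x) as [->|Hne].
  { unfold Rminus; rewrite Rplus_opp_r, Rabs_R0; auto. }
  specialize (Hb y). simpl in Hb. unfold R_dist in Hb.
  rewrite (Hk y Dy), (Hk x Dx) in Hb. apply Hb. split; [split; [exact I|auto]| auto].
Qed.

Lemma mvt_open (g g' : R -> R) a b : a < b ->
  (forall x, a < x < b -> derivable_pt_lim g x (g' x)) ->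
  (forall x, a <= x <= b -> continuity_pt g x) ->
  exists c, a < c < b /\ g b - g a = g' c * (b - a).
Proof.
  intros Hab Hd Hc.
  assert (pr1 : forall c, a < c < b -> derivable_pt g c).
  { intros c Hc'. exists (g' c). apply Hd; auto. }
  assert (pr2 : forall c, a < c < b -> derivable_pt id c).
  { intros c _. apply derivable_pt_id. }
  destruct (MVT g id a b pr1 pr2 Hab Hc) as [c [P HP]].
  { intros; apply derivable_continuous_pt, derivable_pt_id. }
  exists c; split; auto.
  rewrite (derive_pt_eq_0 g c (g' c) (pr1 c P) (Hd c P)) in HP.
  rewrite (derive_pt_eq_0 id c 1 (pr2 c P) (derivable_pt_lim_id c)) in HP.
  unfold id in HP. lra.
Qed.

Definition clampab a b y := Rmax a (Rmin b y).

Lemma clamp_prop a b y : a <= b -> a <= clampab a b y <= b.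
Proof. intros. unfold clampab, Rmax, Rmin. repeat destruct Rle_dec; lra. Qed.

Lemma clamp_id a b y : a <= y <= b -> clampab a b y = y.
Proof. intros. unfold clampab, Rmax, Rmin. repeat destruct Rle_dec; lra. Qed.

Lemma clamp_lip a b x y : a <= x <= b -> Rabs (clampab a b y - x) <= Rabs (y - x).
Proof.
  intros. unfold clampab, Rmax, Rmin. repeat destruct Rle_dec;
  unfold Rabs; repeat destruct Rcase_abs; lra.
Qed.

Lemma mvt_cw (g g' : R -> R) a b : a < b ->
  (forall x, a < x < b -> derivable_pt_lim g x (g' x)) ->
  (forall x, a <= x <= b -> cw (fun y => a <= y <= b) g x) ->
  exists c, a < c < b /\ g b - g a = g' c * (b - a).
Proof.
  intros Hab Hd Hc.
  set (h := fun y => g (clampab a b y)).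
  destruct (mvt_open h g' a b Hab) as [c [Hc1 Hc2]].
  - intros x Hx. apply dpl_local with g (Rmin (x - a) (b - x)).
    + apply Rmin_pos; lra.
    + apply Hd; auto.
    + intros y Hy. unfold h. rewrite clamp_id; auto.
      pose proof (Rmin_l (x - a) (b - x)); pose proof (Rmin_r (x - a) (b - x)).
      unfold Rabs in Hy; destruct Rcase_abs in Hy; lra.
  - intros x Hx. unfold h. apply cw_comp_cont with (fun y => a <= y <= b) 1; auto.
    + lra.
    + intros; apply clamp_prop; lra.
    + apply clamp_id; auto.
    + intros; apply clamp_lip; auto.
  - exists c; split; auto. unfold h in Hc2. rewrite !clamp_id in Hc2; lra.
Qed.

Lemma cw_lim D g x : cw D g x -> limit1_in g D (g x) x.
Proof.
  intros H eps He. destruct (H eps He) as [a [Ha Hb]]. exists a; split; auto.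
  intros y [Dy Hy]. apply Hb; auto.
Qed.

Lemma dpl_eq g x l l' : derivable_pt_lim g x l -> l = l' -> derivable_pt_lim g x l'.
Proof. intros H <-; auto. Qed.

Lemma rmax0_lip a b : Rabs (Rmax a 0 - Rmax b 0) <= Rabs (a - b).
Proof. unfold Rmax; repeat destruct Rle_dec; unfold Rabs; repeat destruct Rcase_abs; lra. Qed.

Lemma max0_lip y s : 0 <= s -> Rabs (Rmax 0 y - s) <= Rabs (y - s).
Proof. intros; unfold Rmax; repeat destruct Rle_dec; unfold Rabs; repeat destruct Rcase_abs; lra. Qed.

Lemma cont_rmax0 g s : continuity_pt g s -> continuity_pt (fun y => Rmax (g y) 0) s.
Proof.
  intros H eps He. destruct (H eps He) as [a [Ha Hb]]. exists a; split; auto.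
  intros y Hy. specialize (Hb y Hy). simpl in *. unfold R_dist in *.
  eapply Rle_lt_trans; [apply rmax0_lip| auto].
Qed.

Lemma cw_max0_cont g s : 0 <= s -> cw nonneg_R g s -> continuity_pt (fun y => g (Rmax 0 y)) s.
Proof.
  intros Hs H. apply cw_comp_cont with nonneg_R 1; auto; try lra.
  - intros; unfold nonneg_R; apply Rmax_l.
  - unfold Rmax; destruct Rle_dec; lra.
  - intros; apply max0_lip; auto.
Qed.

Lemma abs_lt_iv y x d : Rabs (y - x) < d -> x - d < y < x + d.
Proof. unfold Rabs; destruct (Rcase_abs (y - x)); lra. Qed.

Lemma abs_lt_of y x d : x - d < y < x + d -> Rabs (y - x) < d.
Proof. unfold Rabs; destruct (Rcase_abs (y - x)); lra. Qed.

Lemma cw_comp2 D g h x : cw D g x -> continuity_pt h (g x) -> cw D (fun y => h (g y)) x.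
Proof.
  intros Hg Hh eps He. destruct (Hh eps He) as [a [Ha Hb]].
  destruct (Hg a Ha) as [d [Hd Hc]]. exists d; split; auto.
  intros y Dy Hy. destruct (Req_dec (g y) (g x)) as [E|Hne].
  { rewrite E. unfold Rminus; rewrite Rplus_opp_r, Rabs_R0; auto. }
  apply (Hb (g y)). split; [split; [exact I| auto]| apply Hc; auto].
Qed.

Lemma cw_near1 g M : cw (fun y => 0 < y <= 1) g 1 -> M < g 1 ->
  exists y, 0 < y < 1 /\ M < g y.
Proof.
  intros H HM. destruct (H (g 1 - M) ltac:(lra)) as [d [Hd Hb]].
  assert (0 < Rmin d 1) by (apply Rmin_pos; lra).
  assert (Rmin d 1 <= d) by apply Rmin_l. assert (Rmin d 1 <= 1) by apply Rmin_r.
  exists (1 - Rmin d 1 / 2). split; [lra|].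
  specialize (Hb (1 - Rmin d 1 / 2) ltac:(lra) ltac:(apply abs_lt_of; lra)).
  apply abs_lt_iv in Hb. lra.
Qed.


Lemma persist (g g' : R -> R) (b c : R) : 0 < b ->
  (forall x, 0 < x <= b -> derivable_pt_lim g x (g' x)) ->
  (forall x, 0 < x <= b -> c <= g x -> g' x < 0) -> c <= g b ->
  forall x, 0 < x <= b -> c <= g x.
Proof.
  intros Hb Hd Hbad Hgb x Hx.
  destruct (Rle_or_lt c (g x)) as [ok|Hlt]; auto. exfalso.
  assert (Hxb : x < b) by (destruct (Req_dec x b); subst; lra).
  set (E := fun y => x <= y <= b /\ g y < c).
  assert (HbE : bound E) by (exists b; intros y [Hy _]; lra).
  assert (HxE : exists y, E y) by (exists x; split; [lra| auto]).
  destruct (completeness E HbE HxE) as [s [Hs1 Hs2]].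
  assert (Hxs : x <= s) by (apply Hs1; split; [lra|auto]).
  assert (Hsb : s <= b) by (apply Hs2; intros y [Hy _]; lra).
  assert (Hgs : c <= g s).
  { destruct (Rle_or_lt c (g s)) as [ok|Hgs]; auto. exfalso.
    assert (Hsb' : s < b) by (destruct (Req_dec s b); subst; lra).
    pose proof (dpl_cont _ _ _ (Hd s ltac:(lra))) as Hc.
    destruct (Hc (c - g s) ltac:(lra)) as [a [Ha Hb']].
    set (y := s + Rmin a (b - s) / 2).
    assert (Hm : 0 < Rmin a (b - s)) by (apply Rmin_pos; lra).
    pose proof (Rmin_l a (b - s)); pose proof (Rmin_r a (b - s)).
    assert (Ey : E y).
    { split; [unfold y; lra|].
      specialize (Hb' y). simpl in Hb'. unfold R_dist in Hb'.
      assert (Rabs (g y - g s) < c - g s).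
      { apply Hb'. split; [split; [exact I| unfold y; lra]|].
        unfold y. rewrite Rabs_right; lra. }
      unfold Rabs in H1; destruct Rcase_abs in H1; lra. }
    specialize (Hs1 y Ey). unfold y in Hs1. lra. }
  assert (Hs0 : 0 < s) by lra.
  pose proof (Hbad s ltac:(lra) Hgs) as Hneg.
  destruct (Hd s ltac:(lra) (- g' s) ltac:(lra)) as [del Hdel].
  assert (Hxs' : x < s) by (destruct (Req_dec x s); subst; lra).
  set (dl := Rmin del (s - x)).
  assert (Hdl : 0 < dl) by (apply Rmin_pos; [apply cond_pos| lra]).
  assert (dl <= del) by apply Rmin_l. assert (dl <= s - x) by apply Rmin_r.
  destruct (classic (exists y, E y /\ s - dl < y)) as [[y [Ey Hy]]|Hno].
  - assert (Hys : y <= s) by (apply Hs1; auto).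
    assert (Hys' : y <> s) by (intro; subst; destruct Ey; lra).
    specialize (Hdel (y - s) ltac:(lra)).
    assert (Rabs (y - s) < del) by (rewrite Rabs_left; lra).
    specialize (Hdel H1). replace (s + (y - s)) with y in Hdel by ring.
    assert (Hq : (g y - g s) / (y - s) < 0).
    { unfold Rabs in Hdel; destruct Rcase_abs in Hdel; lra. }
    assert (g y > g s).
    { destruct (Rle_or_lt (g y) (g s)); auto.
      assert (0 <= (g y - g s) / (y - s)).
      { unfold Rdiv. replace (g y - g s) with (- (g s - g y)) by ring.
        replace (/ (y - s)) with (- / (s - y)) by (field; lra).
        rewrite Rmult_opp_opp. apply Rmult_le_pos; [lra|].
        left; apply Rinv_0_lt_compat; lra. }
      lra. }
    destruct Ey; lra.
  - assert (Hub : is_upper_bound E (s - dl)).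
    { intros y Ey. destruct (Rle_or_lt y (s - dl)); auto. exfalso; apply Hno; eauto. }
    specialize (Hs2 _ Hub). lra.
Qed.

Lemma logblow (g g' : R -> R) b K : 0 < b -> 0 < K ->
  (forall x, 0 < x <= b -> derivable_pt_lim g x (g' x)) ->
  (forall x, 0 < x <= b -> K / x <= g' x) ->
  (forall x, 0 < x <= b -> 0 <= g x) -> False.
Proof.
  intros Hb HK Hd Hg' Hg.
  set (t := - (Rabs (g b) + 1) / K).
  assert (Ht : t < 0).
  { unfold t. unfold Rdiv. rewrite Ropp_mult_distr_l_reverse.
    apply Ropp_lt_gt_0_contravar. apply Rmult_lt_0_compat.
    pose proof (Rabs_pos (g b)); lra. apply Rinv_0_lt_compat; auto. }
  set (x0 := b * exp t).
  assert (He : exp t < 1) by (rewrite <- exp_0; apply exp_increasing; auto).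
  assert (Hx0 : 0 < x0) by (unfold x0; apply Rmult_lt_0_compat; auto; apply exp_pos).
  assert (Hx0b : x0 < b).
  { unfold x0. pattern b at 2; rewrite <- Rmult_1_r. apply Rmult_lt_compat_l; auto. }
  set (h := fun x => g x - K * ln x).
  destruct (mvt_cw h (fun x => g' x - K * / x) x0 b Hx0b) as [c [Hc1 Hc2]].
  - intros x Hx. unfold h. apply derivable_pt_lim_minus.
    + apply Hd; lra.
    + replace (K * / x) with (0 * ln x + K * / x) by ring.
      apply (derivable_pt_lim_mult (fun _ => K) ln). apply derivable_pt_lim_const.
      apply derivable_pt_lim_ln; lra.
  - intros x Hx. apply cont_cw. unfold h.
    apply continuity_pt_minus.
    + apply (dpl_cont _ _ _ (Hd x ltac:(lra))).
    + apply continuity_pt_mult. apply continuity_pt_const; intros ? ?; auto.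
      apply (dpl_cont _ _ _ (derivable_pt_lim_ln x ltac:(lra))).
  - assert (H1 : K / c <= g' c) by (apply Hg'; lra).
    assert (H2 : 0 <= g' c - K * / c) by (unfold Rdiv in H1; lra).
    assert (H3 : 0 <= h b - h x0) by (rewrite Hc2; apply Rmult_le_pos; lra).
    unfold h in H3.
    assert (Hl : ln x0 = ln b + t) by (unfold x0; rewrite ln_mult, ln_exp; auto; apply exp_pos).
    rewrite Hl in H3.
    assert (Kt : K * t = - (Rabs (g b) + 1)) by (unfold t; field; lra).
    assert (g x0 < 0).
    { pose proof (Rle_abs (g b)). nra. }
    specialize (Hg x0 ltac:(lra)). lra.
Qed.

Lemma lim_bound (r : R -> R) r0 x m : 0 < x <= 1 ->
  limit1_in r (fun y => 0 < y <= 1) r0 0 ->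
  (forall e, 0 < e < x -> m * (x - e) <= r x - r e) -> r0 + m * x <= r x.
Proof.
  intros Hx Hl He.
  destruct (Rle_or_lt (r0 + m * x) (r x)) as [ok|Hlt]; auto. exfalso.
  set (D := r0 + m * x - r x).
  destruct (Hl (D / 2) ltac:(unfold D; lra)) as [a [Ha Hb]].
  assert (Hm : 0 < Rabs m + 1) by (pose proof (Rabs_pos m); lra).
  set (e := Rmin (Rmin a x) (D / (4 * (Rabs m + 1))) / 2).
  assert (H4 : 0 < D / (4 * (Rabs m + 1))) by (apply Rdiv_lt_0_compat; unfold D; lra).
  assert (Hmin1 : Rmin (Rmin a x) (D / (4 * (Rabs m + 1))) <= Rmin a x) by apply Rmin_l.
  assert (Hmin2 : Rmin (Rmin a x) (D / (4 * (Rabs m + 1))) <= D / (4 * (Rabs m + 1))) by apply Rmin_r.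
  assert (Hmin3 : Rmin a x <= a) by apply Rmin_l.
  assert (Hmin4 : Rmin a x <= x) by apply Rmin_r.
  assert (Hmp : 0 < Rmin (Rmin a x) (D / (4 * (Rabs m + 1)))) by (repeat apply Rmin_pos; lra).
  assert (He0 : 0 < e) by (unfold e; lra).
  assert (Hex : e < x) by (unfold e; lra).
  specialize (Hb e). simpl in Hb. unfold R_dist in Hb.
  assert (Rabs (r e - r0) < D / 2).
  { apply Hb. split; [lra|]. rewrite Rminus_0_r, Rabs_right; unfold e; lra. }
  specialize (He e ltac:(lra)).
  assert (Hme : m * e <= D / 4).
  { apply Rle_trans with (Rabs m * e). { pose proof (Rle_abs m). nra. }
    assert (e <= D / (4 * (Rabs m + 1))) by (unfold e; lra).
    assert (Rabs m * e <= (Rabs m + 1) * (D / (4 * (Rabs m + 1)))).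
    { apply Rmult_le_compat; try lra; apply Rabs_pos. }
    replace ((Rabs m + 1) * (D / (4 * (Rabs m + 1)))) with (D / 4) in H1 by (field; lra).
    lra. }
  apply abs_lt_iv in H. unfold D in *. lra.
Qed.


Lemma strict_convex_convex g : strictly_convex_pos g -> convex_pos g.
Proof.
  intros H x y t Hx Hy Ht.
  destruct (Req_dec x y) as [<-|Hne].
  { replace (t * x + (1 - t) * x) with x by ring. right; ring. }
  destruct (Req_dec t 0) as [->|Ht0].
  { replace (0 * x + (1 - 0) * y) with y by ring. right; ring. }
  destruct (Req_dec t 1) as [->|Ht1].
  { replace (1 * x + (1 - 1) * y) with x by ring. right; ring. }
  left; apply H; auto; lra.
Qed.

Lemma convex_slope_l g g' x y : convex_pos g -> 0 < x < y ->
  deriv_within pos_R g x (g' x) -> g' x <= (g y - g x) / (y - x).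
Proof.
  intros Hc Hxy Hd. set (S := (g y - g x) / (y - x)).
  assert (HS : S * (y - x) = g y - g x) by (unfold S; field; lra).
  destruct (Rle_or_lt (g' x) S) as [ok|Hlt]; auto. exfalso.
  destruct (Hd (g' x - S) ltac:(lra)) as [d [Hd0 Hq]].
  assert (Hm : 0 < Rmin d (y - x)) by (apply Rmin_pos; lra).
  assert (Hm1 : Rmin d (y - x) <= d) by apply Rmin_l.
  assert (Hm2 : Rmin d (y - x) <= y - x) by apply Rmin_r.
  set (z := x + Rmin d (y - x) / 2).
  set (t := (y - z) / (y - x)).
  assert (Ht : 0 <= t <= 1).
  { unfold t, z; split; [apply Rmult_le_pos; [lra| left; apply Rinv_0_lt_compat; lra]|].
    apply Rmult_le_reg_r with (y - x); [lra|]. unfold Rdiv. rewrite Rmult_assoc, Rinv_l; lra. }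
  pose proof (Hc x y t ltac:(lra) ltac:(lra) Ht) as Hcv.
  assert (Hz : t * x + (1 - t) * y = z) by (unfold t; field; lra).
  rewrite Hz in Hcv.
  assert (Hzx : z - x = (1 - t) * (y - x)) by (unfold t; field; lra).
  specialize (Hq z ltac:(unfold pos_R, z; lra) ltac:(unfold z; lra)).
  assert (Rabs (z - x) < d) by (unfold z; rewrite Rabs_right; lra).
  specialize (Hq H).
  set (q := (g z - g x) / (z - x)) in Hq.
  assert (Hqe : q * (z - x) = g z - g x) by (unfold q; field; unfold z; lra).
  assert (q > S) by (unfold Rabs in Hq; destruct Rcase_abs in Hq; lra).
  assert (0 < z - x) by (unfold z; lra).
  assert (g z - g x <= S * (z - x)).
  { rewrite Hzx. replace (S * ((1 - t) * (y - x))) with ((1 - t) * (S * (y - x))) by ring.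
    rewrite HS. lra. }
  nra.
Qed.

Lemma convex_slope_r g g' x y : convex_pos g -> 0 < x < y ->
  deriv_within pos_R g y (g' y) -> (g y - g x) / (y - x) <= g' y.
Proof.
  intros Hc Hxy Hd. set (S := (g y - g x) / (y - x)).
  assert (HS : S * (y - x) = g y - g x) by (unfold S; field; lra).
  destruct (Rle_or_lt S (g' y)) as [ok|Hlt]; auto. exfalso.
  destruct (Hd (S - g' y) ltac:(lra)) as [d [Hd0 Hq]].
  assert (Hm : 0 < Rmin d (y - x)) by (apply Rmin_pos; lra).
  assert (Hm1 : Rmin d (y - x) <= d) by apply Rmin_l.
  assert (Hm2 : Rmin d (y - x) <= y - x) by apply Rmin_r.
  set (z := y - Rmin d (y - x) / 2).
  set (t := (y - z) / (y - x)).
  assert (Ht : 0 <= t <= 1).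
  { unfold t, z; split; [apply Rmult_le_pos; [lra| left; apply Rinv_0_lt_compat; lra]|].
    apply Rmult_le_reg_r with (y - x); [lra|]. unfold Rdiv. rewrite Rmult_assoc, Rinv_l; lra. }
  pose proof (Hc x y t ltac:(lra) ltac:(lra) Ht) as Hcv.
  assert (Hz : t * x + (1 - t) * y = z) by (unfold t; field; lra).
  rewrite Hz in Hcv.
  assert (Hyz : y - z = t * (y - x)) by (unfold t; field; lra).
  specialize (Hq z ltac:(unfold pos_R, z; lra) ltac:(unfold z; lra)).
  assert (Rabs (z - y) < d) by (unfold z; rewrite Rabs_left; lra).
  specialize (Hq H).
  set (q := (g z - g y) / (z - y)) in Hq.
  assert (Hqe : q * (y - z) = g y - g z) by (unfold q; field; unfold z; lra).
  assert (q < S) by (unfold Rabs in Hq; destruct Rcase_abs in Hq; lra).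
  assert (0 < y - z) by (unfold z; lra).
  assert (S * (y - z) <= g y - g z).
  { rewrite Hyz. replace (S * (t * (y - x))) with (t * (S * (y - x))) by ring.
    rewrite HS. lra. }
  nra.
Qed.

Lemma convex_dd g g' g'' v : convex_pos g ->
  (forall x, 0 < x -> deriv_within pos_R g x (g' x)) ->
  0 < v -> deriv_within pos_R g' v (g'' v) -> 0 <= g'' v.
Proof.
  intros Hc Hg Hv Hd.
  destruct (Rle_or_lt 0 (g'' v)) as [ok|Hlt]; auto. exfalso.
  destruct (Hd (- g'' v) ltac:(lra)) as [d [Hd0 Hq]].
  set (y := v + d / 2).
  assert (Hmono : g' v <= g' y).
  { pose proof (convex_slope_l g g' v y Hc ltac:(unfold y; lra) (Hg v Hv)).
    pose proof (convex_slope_r g g' v y Hc ltac:(unfold y; lra) (Hg y ltac:(unfold y; lra))).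
    lra. }
  specialize (Hq y ltac:(unfold pos_R, y; lra) ltac:(unfold y; lra)).
  assert (Rabs (y - v) < d) by (unfold y; rewrite Rabs_right; lra).
  specialize (Hq H).
  assert (0 <= (g' y - g' v) / (y - v)).
  { apply Rmult_le_pos; [lra| left; apply Rinv_0_lt_compat; unfold y; lra]. }
  unfold Rabs in Hq; destruct Rcase_abs in Hq; lra.
Qed.

Lemma dec_from_deriv (q dq : R -> R) (D : R -> Prop) a b : a < b ->
  (forall y, a <= y <= b -> D y) ->
  (forall x, a <= x <= b -> deriv_within D q x (dq x)) ->
  (forall x, a < x < b -> derivable_pt_lim q x (dq x)) ->
  (forall x, a < x < b -> dq x < 0) -> q b < q a.
Proof.
  intros Hab HD Hw Hd Hn.
  destruct (mvt_cw q dq a b Hab Hd) as [c [Hc1 Hc2]].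
  - intros x Hx. apply cw_sub with D.
    + intros y Hy. apply HD; auto.
    + apply dw_cw with (dq x); auto.
  - specialize (Hn c Hc1). nra.
Qed.


Lemma wdphi_lim (dphi : R -> R) t0 : 0 <= t0 -> limit1_in dphi pos_R 0 t0 ->
  forall eps, 0 < eps -> exists d, 0 < d /\ forall w, 0 < w -> Rabs (w - t0) < d ->
    Rabs (w * dphi w) < eps.
Proof.
  intros Ht0 Hl eps He.
  destruct (Hl (eps / (t0 + 2))) as [a [Ha Hb]].
  { apply Rdiv_lt_0_compat; lra. }
  exists (Rmin a 1). split; [apply Rmin_pos; lra|].
  intros w Hw Hd. pose proof (Rmin_l a 1); pose proof (Rmin_r a 1).
  specialize (Hb w). simpl in Hb. unfold R_dist in Hb.
  assert (Rabs (dphi w - 0) < eps / (t0 + 2)) by (apply Hb; split; [exact Hw| lra]).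
  rewrite Rminus_0_r in H1. rewrite Rabs_mult.
  assert (Rabs w <= t0 + 1) by (rewrite Rabs_right; unfold Rabs in Hd; destruct Rcase_abs in Hd; lra).
  apply Rle_lt_trans with ((t0 + 2) * Rabs (dphi w)).
  { apply Rmult_le_compat_r; [apply Rabs_pos| lra]. }
  apply Rlt_le_trans with ((t0 + 2) * (eps / (t0 + 2))).
  { apply Rmult_lt_compat_l; lra. }
  right; field; lra.
Qed.

Lemma dphi_pos (dphi : R -> R) t0 : 0 <= t0 -> limit1_in dphi pos_R 0 t0 ->
  (forall v w, 0 < v -> v < w -> v * dphi v < w * dphi w) ->
  forall v, t0 < v -> 0 < dphi v.
Proof.
  intros Ht0 Hl HA v Hv.
  set (u := (t0 + v) / 2).
  assert (Hu : 0 <= u * dphi u).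
  { destruct (Rle_or_lt 0 (u * dphi u)) as [ok|Hlt]; auto. exfalso.
    destruct (wdphi_lim dphi t0 Ht0 Hl (- (u * dphi u)) ltac:(lra)) as [d [Hd Hb]].
    assert (0 < Rmin d (u - t0)) by (apply Rmin_pos; unfold u; lra).
    pose proof (Rmin_l d (u - t0)); pose proof (Rmin_r d (u - t0)).
    set (w := t0 + Rmin d (u - t0) / 2).
    specialize (Hb w ltac:(unfold w; lra) ltac:(unfold w; rewrite Rabs_right; lra)).
    specialize (HA w u ltac:(unfold w; lra) ltac:(unfold w; lra)).
    unfold Rabs in Hb; destruct Rcase_abs in Hb; lra. }
  specialize (HA u v ltac:(unfold u; lra) ltac:(unfold u; lra)).
  assert (0 < v * dphi v) by lra.
  destruct (Rle_or_lt (dphi v) 0); auto.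
  assert (v * dphi v <= 0) by (nra).
  lra.
Qed.

Lemma dphi_npos (dphi : R -> R) t0 : 0 <= t0 -> limit1_in dphi pos_R 0 t0 ->
  (forall v w, 0 < v -> v < w -> v * dphi v < w * dphi w) ->
  forall v, 0 < v <= t0 -> dphi v <= 0.
Proof.
  intros Ht0 Hl HA v Hv.
  assert (Hu : v * dphi v <= 0).
  { destruct (Rle_or_lt (v * dphi v) 0) as [ok|Hlt]; auto. exfalso.
    destruct (wdphi_lim dphi t0 Ht0 Hl (v * dphi v) ltac:(lra)) as [d [Hd Hb]].
    set (w := t0 + d / 2).
    specialize (Hb w ltac:(unfold w; lra) ltac:(unfold w; rewrite Rabs_right; lra)).
    specialize (HA v w ltac:(lra) ltac:(unfold w; lra)).
    unfold Rabs in Hb; destruct Rcase_abs in Hb; lra. }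
  nra.
Qed.


Lemma INR_n1 (n : nat) : (2 <= n)%nat -> 1 <= INR n - 1.
Proof. intros H. apply le_INR in H. simpl in H. lra. Qed.

Lemma ode_sign_neg (n : nat) (fx R T ddphiR ddhw ddr term1 term2 : R) :
  (2 <= n)%nat -> 0 < fx -> 0 <= ddphiR -> 0 <= ddhw -> 0 < R -> 0 < T ->
  term1 < 0 -> 0 < term2 ->
  fx * (ddphiR + ddhw * T ^ (2 * (n - 1))) * ddr
    = (INR n - 1) * term1 - (INR n - 1) * term2 * ddhw * R * T ^ (2 * n - 3) ->
  ddr < 0.
Proof.
  intros Hn Hfx Hp Hh HR HT H1 H2 Heq.
  pose proof (INR_n1 n Hn) as Hn1.
  pose proof (pow_lt T (2 * (n - 1)) HT) as P1.
  pose proof (pow_lt T (2 * n - 3) HT) as P2.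
  destruct (Rlt_or_le ddr 0) as [ok|Hge]; auto. exfalso.
  assert (0 <= fx * (ddphiR + ddhw * T ^ (2 * (n - 1))) * ddr).
  { apply Rmult_le_pos; auto. apply Rmult_le_pos; [lra|]. 
    assert (0 <= ddhw * T ^ (2 * (n - 1))) by (apply Rmult_le_pos; lra). lra. }
  assert ((INR n - 1) * term1 < 0) by nra.
  assert (0 <= (INR n - 1) * term2 * ddhw * R * T ^ (2 * n - 3)).
  { repeat apply Rmult_le_pos; lra. }
  lra.
Qed.

Lemma ode_sign_pos (n : nat) (fx R T ddphiR ddhw ddr term1 term2 : R) :
  (2 <= n)%nat -> 0 < fx -> 0 <= ddphiR -> 0 <= ddhw -> 0 < R -> 0 < T ->
  0 < term1 -> term2 < 0 ->
  fx * (ddphiR + ddhw * T ^ (2 * (n - 1))) * ddr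
    = (INR n - 1) * term1 - (INR n - 1) * term2 * ddhw * R * T ^ (2 * n - 3) ->
  0 < ddr.
Proof.
  intros Hn Hfx Hp Hh HR HT H1 H2 Heq.
  pose proof (INR_n1 n Hn) as Hn1.
  pose proof (pow_lt T (2 * (n - 1)) HT) as P1.
  pose proof (pow_lt T (2 * n - 3) HT) as P2.
  destruct (Rlt_or_le 0 ddr) as [ok|Hge]; auto. exfalso.
  assert (fx * (ddphiR + ddhw * T ^ (2 * (n - 1))) * ddr <= 0).
  { assert (0 <= fx * (ddphiR + ddhw * T ^ (2 * (n - 1)))).
    { apply Rmult_le_pos; [lra|]. 
      assert (0 <= ddhw * T ^ (2 * (n - 1))) by (apply Rmult_le_pos; lra). lra. }
    nra. }
  assert (0 < (INR n - 1) * term1) by nra.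
  assert (0 <= (INR n - 1) * (- term2) * ddhw * R * T ^ (2 * n - 3)).
  { repeat apply Rmult_le_pos; lra. }
  assert ((INR n - 1) * (- term2) * ddhw * R * T ^ (2 * n - 3) =
          - ((INR n - 1) * term2 * ddhw * R * T ^ (2 * n - 3))) by ring.
  lra.
Qed.

Lemma bracket1 (dphi : R -> R) (t0 sx T dfr dfx y q1s : R) :
  0 < T -> 1 < sx -> 0 < dfr -> 0 < dfx -> dfx < dfr * sx ->
  (forall v, t0 < v -> 0 < dphi v) -> (forall v, 0 < v <= t0 -> dphi v <= 0) ->
  (forall v w, 0 < v -> v < w -> v * dphi v < w * dphi w) ->
  (t0 < T -> dphi T <= q1s * dphi (sx * T)) -> q1s < y -> y * dfr <= dfx ->
  dfr * dphi T - dfx * dphi (sx * T) < 0.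
Proof.
  intros HT Hs Hdfr Hdfx Hc Hpos Hnpos HA Hq Hqy Hy.
  assert (HR : T < sx * T) by nra.
  pose proof (HA T (sx * T) HT HR) as HA'.
  assert (Hd : dphi T < sx * dphi (sx * T)) by nra.
  destruct (Rle_or_lt (dphi (sx * T)) 0) as [Hn|Hp].
  - assert (dfr * dphi T < dfr * (sx * dphi (sx * T))) by (apply Rmult_lt_compat_l; auto).
    assert ((dfr * sx - dfx) * dphi (sx * T) <= 0) by (assert (0 <= (dfr * sx - dfx) * (- dphi (sx * T))) by (apply Rmult_le_pos; lra); lra).
    nra.
  - destruct (Rle_or_lt T t0) as [HTt|HTt].
    + pose proof (Hnpos T ltac:(lra)). nra.
    + specialize (Hq HTt).
      assert (dfr * dphi T <= dfr * (q1s * dphi (sx * T))) by (apply Rmult_le_compat_l; lra).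
      assert (q1s * dphi (sx * T) < y * dphi (sx * T)) by (apply Rmult_lt_compat_r; lra).
      assert (dfr * (y * dphi (sx * T)) <= dfx * dphi (sx * T)).
      { replace (dfr * (y * dphi (sx * T))) with ((y * dfr) * dphi (sx * T)) by ring.
        apply Rmult_le_compat_r; lra. }
      nra.
Qed.

Lemma bracket2 (dphi : R -> R) (t0 sx T dfr dfx y q0s : R) :
  0 < T -> 0 < sx < 1 -> 0 < dfr -> 0 < dfx -> dfr * sx < dfx ->
  (forall v, t0 < v -> 0 < dphi v) -> (forall v, 0 < v <= t0 -> dphi v <= 0) ->
  (forall v w, 0 < v -> v < w -> v * dphi v < w * dphi w) ->
  (t0 < sx * T -> q0s * dphi (sx * T) <= dphi T) -> y < q0s -> dfx <= y * dfr ->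
  0 < dfr * dphi T - dfx * dphi (sx * T).
Proof.
  intros HT Hs Hdfr Hdfx Hc Hpos Hnpos HA Hq Hqy Hy.
  assert (HR : sx * T < T) by nra.
  assert (HR0 : 0 < sx * T) by nra.
  pose proof (HA (sx * T) T HR0 HR) as HA'.
  assert (Hd : sx * dphi (sx * T) < dphi T) by nra.
  destruct (Rle_or_lt (dphi (sx * T)) 0) as [Hn|Hp].
  - assert (dfr * (sx * dphi (sx * T)) < dfr * dphi T) by (apply Rmult_lt_compat_l; auto).
    assert (0 <= (dfx - dfr * sx) * (- dphi (sx * T))) by (apply Rmult_le_pos; lra).
    nra.
  - destruct (Rle_or_lt (sx * T) t0) as [HTt|HTt].
    + pose proof (Hnpos (sx * T) ltac:(lra)). lra.
    + specialize (Hq HTt).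
      assert (y * dphi (sx * T) < q0s * dphi (sx * T)) by (apply Rmult_lt_compat_r; lra).
      assert (dfx * dphi (sx * T) <= (y * dfr) * dphi (sx * T)) by (apply Rmult_le_compat_r; lra).
      assert (dfr * (y * dphi (sx * T)) < dfr * dphi T) by (apply Rmult_lt_compat_l; lra).
      nra.
Qed.

Module L1M.
Import Coquelicot.Coquelicot.

Lemma kc_cont (kappa : R -> R) :
  (forall x, 0 <= x -> limit1_in kappa nonneg_R (kappa x) x) ->
  forall s, continuity_pt (fun y => kappa (Rmax 0 y)) s.
Proof.
  intros Hk s. destruct (Rle_or_lt 0 s) as [Hs|Hs].
  - apply cw_max0_cont; auto. apply lim_cw; auto.
  - intros eps He. exists (-s). split; [lra|]. intros y [_ Hy]. simpl in *. unfold R_dist in *.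
    assert (y < 0) by (unfold Rabs in Hy; destruct Rcase_abs in Hy; lra).
    rewrite (Rmax_left 0 y), (Rmax_left 0 s) by lra.
    unfold Rminus; rewrite Rplus_opp_r, Rabs_R0; auto.
Qed.

Lemma pc_cont (kappa : R -> R) :
  (forall x, 0 <= x -> limit1_in kappa nonneg_R (kappa x) x) ->
  forall s, continuity_pt (fun y => y * Rmax (kappa (Rmax 0 y)) 0) s.
Proof.
  intros Hk s.
  apply (continuity_pt_mult (fun y => y) (fun y => Rmax (kappa (Rmax 0 y)) 0)).
  - apply derivable_continuous_pt, derivable_pt_id.
  - apply cont_rmax0, kc_cont; auto.
Qed.

Lemma df_pos (kappa f df : R -> R) L :
  (forall x, 0 <= x -> limit1_in kappa nonneg_R (kappa x) x) ->
  (forall x, 0 <= x -> deriv_within nonneg_R f x (df x)) ->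
  (forall x, 0 <= x -> deriv_within nonneg_R df x (- kappa x * f x)) ->
  f 0 = 0 -> df 0 = 1 -> 0 < L ->
  (forall pr : Riemann_integrable (fun s => s * Rmax (kappa s) 0) 0 L, RiemannInt pr <= 1) ->
  forall x, 0 <= x <= L -> 0 < df x.
Proof.
  intros Hk Hf Hdf Hf0 Hdf0 HL Hmu.
  set (pc := fun y => y * Rmax (kappa (Rmax 0 y)) 0).
  assert (Hpc : forall s, continuity_pt pc s) by (apply pc_cont; auto).
  assert (Hex : forall a b, ex_RInt pc a b).
  { intros a b. apply (@ex_RInt_continuous R_CompleteNormedModule). intros z _. apply continuity_pt_filterlim, Hpc. }
  set (P := (fun s => RInt pc 0 s) : R -> R).
  assert (HPd : forall s, derivable_pt_lim P s (pc s)).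
  { intros s. apply is_derive_Reals. apply (@is_derive_RInt R_CompleteNormedModule pc P 0 s).
    - apply filter_forall. intros b. apply (@RInt_correct R_CompleteNormedModule), Hex.
    - apply continuity_pt_filterlim, Hpc. }
  assert (HP0 : P 0 = 0) by (unfold P; rewrite RInt_point; reflexivity).
  assert (HPL : P L <= 1).
  { assert (He : forall x, Rmin 0 L < x < Rmax 0 L -> pc x = x * Rmax (kappa x) 0).
    { intros x Hx. unfold pc. rewrite Rmin_left, Rmax_right in Hx by lra.
      rewrite (Rmax_right 0 x) by lra. reflexivity. }
    pose proof (@ex_RInt_ext R_CompleteNormedModule _ _ 0 L He (Hex 0 L)) as Hex2.
    pose proof (ex_RInt_Reals_0 _ _ _ Hex2) as pr.
    specialize (Hmu pr). rewrite <- RInt_Reals in Hmu.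
    unfold P. rewrite (@RInt_ext R_CompleteNormedModule _ _ 0 L He). exact Hmu. }
  assert (Hpc0 : forall s, 0 < s -> pc s = s * Rmax (kappa s) 0).
  { intros s Hs. unfold pc. rewrite (Rmax_right 0 s) by lra. reflexivity. }
  assert (Hpcpos : forall s, 0 < s -> 0 <= pc s).
  { intros s Hs. rewrite Hpc0; auto. apply Rmult_le_pos; [lra| apply Rmax_r]. }
  assert (HPmono : forall a b, 0 <= a <= b -> P a <= P b).
  { intros a b Hab. destruct (Req_dec a b) as [->|Hne]; [lra|].
    destruct (mvt_cw P pc a b ltac:(lra)) as [c [Hc1 Hc2]].
    - intros; apply HPd.
    - intros; apply cont_cw, (dpl_cont _ _ _ (HPd x)).
    - assert (0 <= pc c) by (apply Hpcpos; lra). nra. }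
  assert (fcw : forall x, 0 <= x -> cw nonneg_R f x) by (intros; eapply dw_cw; eauto).
  assert (dfcw : forall x, 0 <= x -> cw nonneg_R df x) by (intros; eapply dw_cw; eauto).
  assert (fder : forall x, 0 < x -> derivable_pt_lim f x (df x)).
  { intros x Hx. apply (dw_int nonneg_R f x (df x) x); [apply Hf; lra| lra|].
    intros y Hy; unfold nonneg_R; apply abs_lt_iv in Hy; lra. }
  assert (dfder : forall x, 0 < x -> derivable_pt_lim df x (- kappa x * f x)).
  { intros x Hx. apply (dw_int nonneg_R df x _ x); [apply Hdf; lra| lra|].
    intros y Hy; unfold nonneg_R; apply abs_lt_iv in Hy; lra. }
  assert (fcwab : forall a b x, 0 <= a -> a <= x <= b -> cw (fun y => a <= y <= b) f x).
  { intros a b x Ha Hx. apply cw_sub with nonneg_R; [intros y Hy; unfold nonneg_R; lra|].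
    apply fcw; lra. }
  intros x1 Hx1.
  destruct (Rlt_or_le 0 (df x1)) as [ok|Hbad]; auto. exfalso.
  set (S := fun y => 0 <= y <= x1 /\ forall z, 0 <= z <= y -> 0 < df z).
  assert (HbS : bound S) by (exists x1; intros y [Hy _]; lra).
  assert (HS0 : exists y, S y).
  { exists 0. split; [lra|]. intros z Hz. replace z with 0 by lra. lra. }
  destruct (completeness S HbS HS0) as [xs [Hxs1 Hxs2]].
  assert (Hxs0 : 0 <= xs).
  { apply Hxs1. split; [lra|]. intros z Hz. replace z with 0 by lra. lra. }
  assert (Hxsx1 : xs <= x1) by (apply Hxs2; intros y [Hy _]; lra).
  assert (Hbelow : forall z, 0 <= z < xs -> 0 < df z).
  { intros z Hz. destruct (classic (exists y, S y /\ z < y)) as [[y [[_ Hy] Hzy]]|Hno].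
    - apply Hy; lra.
    - assert (is_upper_bound S z).
      { intros y Sy. destruct (Rle_or_lt y z); auto. exfalso; apply Hno; eauto. }
      specialize (Hxs2 z H). lra. }
  assert (Hdfxs : df xs <= 0).
  { destruct (Rle_or_lt (df xs) 0) as [ok|Hp]; auto. exfalso.
    assert (Hne : xs < x1) by (destruct (Req_dec xs x1); subst; lra).
    destruct (dfcw xs Hxs0 (df xs) Hp) as [d [Hd Hb]].
    assert (0 < Rmin d (x1 - xs)) by (apply Rmin_pos; lra).
    assert (Rmin d (x1 - xs) <= d) by apply Rmin_l.
    assert (Rmin d (x1 - xs) <= x1 - xs) by apply Rmin_r.
    set (y := xs + Rmin d (x1 - xs) / 2).
    assert (Sy : S y).
    { split; [unfold y; lra|]. intros z Hz.
      destruct (Rlt_or_le z xs) as [Hz'|Hz']; [apply Hbelow; lra|].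
      assert (Rabs (df z - df xs) < df xs).
      { apply Hb; [unfold nonneg_R; lra|]. rewrite Rabs_right; unfold y in Hz; lra. }
      unfold Rabs in H2; destruct Rcase_abs in H2; lra. }
    specialize (Hxs1 y Sy). unfold y in Hxs1. lra. }
  assert (Hxspos : 0 < xs) by (destruct (Req_dec xs 0) as [Hz|]; [rewrite Hz in Hdfxs; lra| lra]).
  assert (Hflt : forall s, 0 <= s < xs -> f s < f xs).
  { intros s Hs. destruct (mvt_cw f df s xs ltac:(lra)) as [c [Hc1 Hc2]].
    - intros; apply fder; lra.
    - intros; apply fcwab; lra.
    - assert (0 < df c) by (apply Hbelow; lra). nra. }
  assert (Hfpos : forall s, 0 < s <= xs -> 0 < f s).
  { intros s Hs. destruct (mvt_cw f df 0 s ltac:(lra)) as [c [Hc1 Hc2]].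
    - intros; apply fder; lra.
    - intros; apply fcwab; lra.
    - assert (0 < df c) by (apply Hbelow; lra). rewrite Hf0 in Hc2. nra. }
  set (fx := f xs).
  set (G := fun s => s * df s - f s + fx * P s).
  set (G' := fun s => s * (fx * Rmax (kappa s) 0 - kappa s * f s)).
  assert (HGd : forall s, 0 < s -> derivable_pt_lim G s (G' s)).
  { intros s Hs. unfold G.
    apply dpl_eq with ((1 * df s + s * (- kappa s * f s) - df s) + fx * pc s).
    - apply (derivable_pt_lim_plus (fun s => s * df s - f s) (fun s => fx * P s)).
      + apply (derivable_pt_lim_minus (fun s => s * df s) f).
        * apply (derivable_pt_lim_mult (fun s => s) df).
          apply derivable_pt_lim_id. apply dfder; auto.
        * apply fder; auto.
      + apply dpl_eq with (0 * P s + fx * pc s); [|ring].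
        apply (derivable_pt_lim_mult (fun _ => fx) P).
        apply derivable_pt_lim_const. apply HPd.
    - unfold G'. rewrite Hpc0; auto. ring. }
  assert (HG'pos : forall s, 0 < s < xs -> s * Rmax (kappa s) 0 * (fx - f s) <= G' s).
  { intros s Hs. unfold G'. assert (0 < f s) by (apply Hfpos; lra).
    assert (kappa s * f s <= Rmax (kappa s) 0 * f s).
    { apply Rmult_le_compat_r; [lra| apply Rmax_l]. }
    assert (0 < s) by lra. nra. }
  assert (HG'nn : forall s, 0 < s < xs -> 0 <= G' s).
  { intros s Hs. eapply Rle_trans; [|apply HG'pos; auto].
    assert (f s < fx) by (apply Hflt; lra).
    apply Rmult_le_pos; [apply Rmult_le_pos; [lra| apply Rmax_r]| lra]. }
  assert (HGcw : forall a b x, 0 <= a -> a <= x <= b -> cw (fun y => a <= y <= b) G x).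
  { intros a b x Ha Hx. apply cw_sub with nonneg_R; [intros y Hy; unfold nonneg_R; lra|].
    apply lim_cw. unfold G.
    apply (limit_plus (fun s => s * df s - f s) (fun s => fx * P s)).
    - apply (limit_minus (fun s => s * df s) f).
      + apply (limit_mul (fun s => s) df).
        * apply lim_x.
        * apply cw_lim, dfcw; lra.
      + apply cw_lim, fcw; lra.
    - apply (limit_mul (fun _ => fx) P).
      + apply (limit_free (fun _ => fx) _ 0 x).
      + apply cw_lim, cont_cw, (dpl_cont _ _ _ (HPd x)). }
  assert (HGmono : forall a b, 0 <= a -> a < b -> b <= xs -> G a <= G b).
  { intros a b Ha Hab Hb. destruct (mvt_cw G G' a b Hab) as [c [Hc1 Hc2]].
    - intros; apply HGd; lra.
    - intros; apply HGcw; lra.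
    - assert (0 <= G' c) by (apply HG'nn; lra). nra. }
  assert (HG0 : G 0 = 0) by (unfold G; rewrite HP0, Hf0; ring).
  assert (HGxs : G xs = xs * df xs - fx + fx * P xs) by reflexivity.
  assert (Hfxpos : 0 < fx) by (apply Hfpos; lra).
  assert (HPxs : P xs <= 1) by (apply Rle_trans with (P L); [apply HPmono; lra| exact HPL]).
  destruct (classic (exists s1, 0 < s1 < xs /\ 0 < kappa s1)) as [[s1 [Hs1 Hks1]]|Hnok].
  -
    assert (HG's1 : 0 < G' s1).
    { eapply Rlt_le_trans; [|apply HG'pos; auto].
      assert (f s1 < fx) by (apply Hflt; lra).
      rewrite Rmax_left by lra.
      apply Rmult_lt_0_compat; [apply Rmult_lt_0_compat|]; lra. }
    destruct (HGd s1 ltac:(lra) (G' s1) HG's1) as [del Hdel].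
    assert (0 < Rmin del (xs - s1)) by (apply Rmin_pos; [apply cond_pos| lra]).
    assert (Rmin del (xs - s1) <= del) by apply Rmin_l.
    assert (Rmin del (xs - s1) <= xs - s1) by apply Rmin_r.
    set (hh := Rmin del (xs - s1) / 2).
    specialize (Hdel hh ltac:(unfold hh; lra) ltac:(unfold hh; rewrite Rabs_right; lra)).
    assert (Hq : 0 < (G (s1 + hh) - G s1) / hh).
    { unfold Rabs in Hdel; destruct Rcase_abs in Hdel; lra. }
    assert (Hinc : G s1 < G (s1 + hh)).
    { assert (0 < hh) by (unfold hh; lra).
      assert (0 < (G (s1 + hh) - G s1) / hh * hh) by (apply Rmult_lt_0_compat; auto).
      replace ((G (s1 + hh) - G s1) / hh * hh) with (G (s1 + hh) - G s1) in H3 by (field; lra).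
      lra. }
    assert (G 0 <= G s1) by (apply HGmono; lra).
    assert (G (s1 + hh) <= G xs).
    { destruct (Req_dec (s1 + hh) xs) as [He|He]; [rewrite He; lra|].
      apply HGmono; unfold hh in *; lra. }
    assert (HGpos : 0 < G xs) by lra.
    rewrite HGxs in HGpos.
    assert (xs * df xs <= 0) by nra.
    assert (1 < P xs) by nra. lra.
  - assert (HPz : P xs = 0).
    { destruct (mvt_cw P pc 0 xs Hxspos) as [c [Hc1 Hc2]].
      - intros; apply HPd.
      - intros; apply cont_cw, (dpl_cont _ _ _ (HPd x)).
      - assert (kappa c <= 0).
        { destruct (Rle_or_lt (kappa c) 0); auto. exfalso; apply Hnok; exists c; split; auto. }
        rewrite Hpc0 in Hc2 by lra. rewrite Rmax_right in Hc2 by lra. rewrite HP0 in Hc2. lra. }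
    assert (HGg : G 0 <= G xs) by (apply HGmono; lra).
    rewrite HGxs, HPz, HG0 in HGg. nra.
Qed.

End L1M.
Import L1M.


Theorem corollary4p1
  (n : nat) (hn : (2 <= n)%nat)
  (kappa : R -> R)
  (* kappa continuous on [0,oo) *)
  (hkappa : forall x, 0 <= x -> limit1_in kappa nonneg_R (kappa x) x)
  (* f'' + kappa f = 0 on [0,oo), f(0)=0, f'(0)=1; df = f' *)
  (f df : R -> R)
  (hf : forall x, 0 <= x -> deriv_within nonneg_R f x (df x))
  (hdf : forall x, 0 <= x -> deriv_within nonneg_R df x (- kappa x * f x))
  (hf0 : f 0 = 0) (hdf0 : df 0 = 1)
  (lam : R) (hlam : 0 < lam)
  (* mu_+(max{lam,1}) <= 1 *)
  (hmu : forall pr : Riemann_integrable (fun s => s * Rmax (kappa s) 0) 0 (Rmax lam 1),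
           RiemannInt pr <= 1)
  (* (A4): phi : (0,oo) -> (0,oo), C^2, convex; dphi = phi', ddphi = phi'' *)
  (phi dphi ddphi : R -> R)
  (hphi_pos : forall v, 0 < v -> 0 < phi v)
  (hphi1 : forall v, 0 < v -> deriv_within pos_R phi v (dphi v))
  (hphi2 : forall v, 0 < v -> deriv_within pos_R dphi v (ddphi v))
  (hphi2c : forall v, 0 < v -> limit1_in ddphi pos_R (ddphi v) v)
  (hphi_cvx : convex_pos phi)
  (* (A1): h C^2 and strictly convex on (0,oo); dh = h', ddh = h'' *)
  (h dh ddh : R -> R)
  (hh1 : forall v, 0 < v -> deriv_within pos_R h v (dh v))
  (hh2 : forall v, 0 < v -> deriv_within pos_R dh v (ddh v))
  (hh2c : forall v, 0 < v -> limit1_in ddh pos_R (ddh v) v)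
  (hh_cvx : strictly_convex_pos h)
  (* (A5): v phi'(v) increasing *)
  (hA5 : forall v w, 0 < v -> v < w -> v * dphi v < w * dphi w)
  (* (A6) *)
  (t0 : R) (ht0 : 0 <= t0)
  (ht0phi : limit1_in dphi pos_R 0 t0)
  (q1 q0 dq1 dq0 : R -> R)
  (hq1_def : forall s, 1 <= s ->
     is_lub (fun y => exists v, t0 < v /\ y = dphi v / dphi (s * v)) (q1 s))
  (hq0_def : forall s, 0 < s <= 1 ->
     is_glb (fun y => exists v, t0 / s < v /\ y = dphi v / dphi (s * v)) (q0 s))
  (hq1_C1 : forall s, 1 <= s -> deriv_within (fun x => 1 <= x) q1 s (dq1 s))
  (hdq1_cont : forall s, 1 <= s -> limit1_in dq1 (fun x => 1 <= x) (dq1 s) s)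
  (hq0_C1 : forall s, 0 < s <= 1 -> deriv_within (fun x => 0 < x <= 1) q0 s (dq0 s))
  (hdq0_cont : forall s, 0 < s <= 1 -> limit1_in dq0 (fun x => 0 < x <= 1) (dq0 s) s)
  (hq1_lim : forall eps, 0 < eps -> exists M, forall s, M < s -> 1 <= s -> Rabs (q1 s) < eps)
  (hq0_lim : forall M, exists delta, 0 < delta /\ forall s, 0 < s < delta -> s <= 1 -> M < q0 s)
  (hdq1_neg : forall s, 1 <= s -> dq1 s < 0)
  (hdq0_neg : forall s, 0 < s <= 1 -> dq0 s < 0)
  (* q1^{-1} : (0,1] -> [1,oo) and q0^{-1} : [1,oo) -> (0,1] *)
  (q1inv q0inv : R -> R)
  (hq1inv : forall y, 0 < y <= 1 -> 1 <= q1inv y /\ q1 (q1inv y) = y)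
  (hq0inv : forall y, 1 <= y -> (0 < q0inv y <= 1) /\ q0 (q0inv y) = y)
  (* b0(rho) = min_{[0,rho]} f', b1(rho) = max_{[0,rho]} f' *)
  (b0 b1 : R -> R)
  (hb0 : forall rho, 0 <= rho -> is_glb (fun y => exists x, 0 <= x <= rho /\ y = df x) (b0 rho))
  (hb1 : forall rho, 0 <= rho -> is_lub (fun y => exists x, 0 <= x <= rho /\ y = df x) (b1 rho))
  (* equilibrium solution r with r(1) = lam; dr = r', ddr = r'' *)
  (r dr ddr : R -> R) (r0 : R)
  (hr1 : forall rho, 0 < rho <= 1 -> deriv_within (fun x => 0 < x <= 1) r rho (dr rho))
  (hdr_cont : forall rho, 0 < rho <= 1 -> limit1_in dr (fun x => 0 < x <= 1) (dr rho) rho)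
  (hr2 : forall rho, 0 < rho < 1 -> derivable_pt_lim dr rho (ddr rho))
  (hdr_pos : forall rho, 0 < rho <= 1 -> 0 < dr rho)
  (hr0 : limit1_in r (fun x => 0 < x <= 1) r0 0) (hr0_nonneg : 0 <= r0)
  (hrlam : r 1 = lam)
  (hode : forall rho, 0 < rho < 1 ->
     let tau := f (r rho) / f rho in
     f rho * (ddphi (dr rho) + ddh (dr rho * tau ^ (n - 1)) * tau ^ (2 * (n - 1))) * ddr rho
     = (INR n - 1) * (df (r rho) * dphi tau - df rho * dphi (dr rho))
       - (INR n - 1) * (df (r rho) * dr rho - df rho * tau)
           * ddh (dr rho * tau ^ (n - 1)) * dr rho * tau ^ (2 * n - 3))
  :
  (forall rho, 0 < rho <= 1 ->
     dr rho <= Rmax (b1 rho / b0 (r rho)) (q1inv (b0 rho / b1 (r rho)))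
               * (f (r rho) / f rho))
  /\
  ((exists rho0, 0 < rho0 <= 1 /\
      dr rho0 < Rmin (b0 rho0 / b1 (r rho0)) (q0inv (b1 rho0 / b0 (r rho0)))
                * (f (r rho0) / f rho0))
   -> 0 < r0).

Proof.
  set (L := Rmax lam 1).
  assert (HL1 : 1 <= L) by apply Rmax_r.
  assert (HLl : lam <= L) by apply Rmax_l.
  pose proof (df_pos kappa f df L hkappa hf hdf hf0 hdf0 ltac:(lra) hmu) as Hdfpos.
  assert (Hdfc : forall c, 0 <= c <= L -> continuity_pt (fun y => df (Rmax 0 y)) c).
  { intros c Hc. apply cw_max0_cont; [lra|]. eapply dw_cw; apply hdf; lra. }
  destruct (continuity_ab_min _ 0 L ltac:(lra) Hdfc) as [mx [Hmx1 Hmx2]].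
  destruct (continuity_ab_maj _ 0 L ltac:(lra) Hdfc) as [Mx [HMx1 HMx2]].
  set (B0 := df mx). set (C := df Mx).
  assert (HB : forall x, 0 <= x <= L -> B0 <= df x <= C).
  { intros x Hx. specialize (Hmx1 x Hx). specialize (HMx1 x Hx).
    rewrite !Rmax_right in Hmx1, HMx1 by lra. unfold B0, C; lra. }
  assert (HB0 : 0 < B0) by (apply Hdfpos; lra).
  assert (HC1 : 1 <= C) by (rewrite <- hdf0; apply HB; lra).
  assert (fcw : forall x, 0 <= x -> cw nonneg_R f x) by (intros; eapply dw_cw; eauto).
  assert (fder : forall x, 0 < x -> derivable_pt_lim f x (df x)).
  { intros x Hx. apply (dw_int nonneg_R f x (df x) x); [apply hf; lra| lra|].
    intros y Hy; unfold nonneg_R; apply abs_lt_iv in Hy; lra. }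
  assert (Hfb : forall y, 0 < y <= L -> B0 * y <= f y <= C * y).
  { intros y Hy. destruct (mvt_cw f df 0 y ltac:(lra)) as [c [Hc1 Hc2]].
    - intros; apply fder; lra.
    - intros x Hx. apply cw_sub with nonneg_R; [intros z Hz; unfold nonneg_R; lra|].
      apply fcw; lra.
    - rewrite hf0 in Hc2. specialize (HB c ltac:(lra)). nra. }
  assert (Hfpos : forall y, 0 < y <= L -> 0 < f y).
  { intros y Hy. specialize (Hfb y Hy). nra. }
  assert (Hb0le : forall x y, 0 <= x <= L -> 0 <= y <= x -> b0 x <= df y).
  { intros x y Hx Hy. destruct (hb0 x ltac:(lra)) as [H1 _]. apply H1. exists y; split; auto. }
  assert (Hb1ge : forall x y, 0 <= x <= L -> 0 <= y <= x -> df y <= b1 x).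
  { intros x y Hx Hy. destruct (hb1 x ltac:(lra)) as [H1 _]. apply H1. exists y; split; auto. }
  assert (Hb0B : forall x, 0 <= x <= L -> B0 <= b0 x).
  { intros x Hx. destruct (hb0 x ltac:(lra)) as [_ H2]. apply H2.
    intros z [y [Hy ->]]. apply HB; lra. }
  assert (Hb1C : forall x, 0 <= x <= L -> b1 x <= C).
  { intros x Hx. destruct (hb1 x ltac:(lra)) as [_ H2]. apply H2.
    intros z [y [Hy ->]]. apply HB; lra. }
  assert (Hb01 : forall x, 0 <= x <= L -> b0 x <= 1).
  { intros x Hx. rewrite <- hdf0. apply Hb0le; lra. }
  assert (Hb11 : forall x, 0 <= x <= L -> 1 <= b1 x).
  { intros x Hx. rewrite <- hdf0. apply Hb1ge; lra. }
  pose proof (dphi_pos dphi t0 ht0 ht0phi hA5) as Hdp.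
  pose proof (dphi_npos dphi t0 ht0 ht0phi hA5) as Hdnp.
  assert (Hddphi : forall v, 0 < v -> 0 <= ddphi v).
  { intros v Hv. apply (convex_dd phi dphi ddphi v hphi_cvx hphi1 Hv (hphi2 v Hv)). }
  assert (Hddh : forall v, 0 < v -> 0 <= ddh v).
  { intros v Hv. apply (convex_dd h dh ddh v (strict_convex_convex h hh_cvx) hh1 Hv (hh2 v Hv)). }
  assert (Hq1dec : forall a b, 1 <= a < b -> q1 b < q1 a).
  { intros a b Hab. apply (dec_from_deriv q1 dq1 (fun x => 1 <= x)); try lra.
    - intros; lra.
    - intros; apply hq1_C1; lra.
    - intros x Hx. apply (dw_int (fun x => 1 <= x) q1 x (dq1 x) (x - 1)); [apply hq1_C1; lra| lra|].
      intros y Hy; apply abs_lt_iv in Hy; lra.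
    - intros; apply hdq1_neg; lra. }
  assert (Hq0dec : forall a b, 0 < a < b -> b <= 1 -> q0 b < q0 a).
  { intros a b Hab Hb. apply (dec_from_deriv q0 dq0 (fun x => 0 < x <= 1)); try lra.
    - intros; lra.
    - intros; apply hq0_C1; lra.
    - intros x Hx. apply (dw_int (fun x => 0 < x <= 1) q0 x (dq0 x) (Rmin x (1 - x))); [apply hq0_C1; lra| apply Rmin_pos; lra|].
      intros y Hy; apply abs_lt_iv in Hy.
      pose proof (Rmin_l x (1 - x)); pose proof (Rmin_r x (1 - x)); lra.
    - intros; apply hdq0_neg; lra. }
  assert (rcw : forall x, 0 < x <= 1 -> cw (fun y => 0 < y <= 1) r x) by (intros; eapply dw_cw; eauto).
  assert (rder : forall x, 0 < x < 1 -> derivable_pt_lim r x (dr x)).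
  { intros x Hx. apply (dw_int (fun y => 0 < y <= 1) r x (dr x) (Rmin x (1 - x))); [apply hr1; lra| apply Rmin_pos; lra|].
    intros y Hy; apply abs_lt_iv in Hy.
    pose proof (Rmin_l x (1 - x)); pose proof (Rmin_r x (1 - x)); lra. }
  assert (rcwab : forall a b x, 0 < a -> b <= 1 -> a <= x <= b -> cw (fun y => a <= y <= b) r x).
  { intros a b x Ha Hb Hx. apply cw_sub with (fun y => 0 < y <= 1); [intros; lra|]. apply rcw; lra. }
  assert (Hrinc : forall a b, 0 < a < b -> b <= 1 -> r a < r b).
  { intros a b Hab Hb. destruct (mvt_cw r dr a b ltac:(lra)) as [c [Hc1 Hc2]].
    - intros; apply rder; lra.
    - intros; apply rcwab; lra.
    - specialize (hdr_pos c ltac:(lra)). nra. }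
  assert (Hr0le : forall x, 0 < x <= 1 -> r0 <= r x).
  { intros x Hx. pose proof (lim_bound r r0 x 0 Hx hr0) as H.
    rewrite Rmult_0_l, Rplus_0_r in H. apply H.
    intros e He. rewrite Rmult_0_l. pose proof (Hrinc e x ltac:(lra) ltac:(lra)). lra. }
  assert (Hrpos : forall x, 0 < x <= 1 -> 0 < r x).
  { intros x Hx. pose proof (Hr0le (x / 2) ltac:(lra)). pose proof (Hrinc (x / 2) x ltac:(lra) ltac:(lra)). lra. }
  assert (Hrlam : forall x, 0 < x <= 1 -> r x <= lam).
  { intros x Hx. destruct (Req_dec x 1) as [->|Hne]; [lra|].
    rewrite <- hrlam. left; apply Hrinc; lra. }
  assert (Hrin : forall x, 0 < x <= 1 -> 0 < r x <= L) by (intros x Hx; split; [apply Hrpos; auto| pose proof (Hrlam x Hx); lra]).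
  assert (Hfr : forall x, 0 < x <= 1 -> 0 < f (r x)) by (intros; apply Hfpos, Hrin; auto).
  assert (Hfx : forall x, 0 < x <= 1 -> 0 < f x) by (intros; apply Hfpos; lra).
  set (tau := fun x => f (r x) / f x).
  assert (Htaupos : forall x, 0 < x <= 1 -> 0 < tau x).
  { intros x Hx. unfold tau. apply Rdiv_lt_0_compat; auto. }
  set (tau' := fun x => (df (r x) * dr x * f x - df x * f (r x)) / (f x)²).
  assert (Htaud : forall x, 0 < x < 1 -> derivable_pt_lim tau x (tau' x)).
  { intros x Hx. unfold tau, tau'.
    apply (derivable_pt_lim_div (fun x => f (r x)) f x (df (r x) * dr x) (df x)).
    - apply (derivable_pt_lim_comp r f x (dr x) (df (r x))); [apply rder; auto|].
      apply fder, Hrpos; lra.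
    - apply fder; lra.
    - specialize (Hfx x ltac:(lra)); lra. }
  set (s := fun x => dr x / tau x).
  set (s' := fun x => (ddr x * tau x - tau' x * dr x) / (tau x)²).
  assert (Hsd : forall x, 0 < x < 1 -> derivable_pt_lim s x (s' x)).
  { intros x Hx. unfold s, s'.
    apply (derivable_pt_lim_div dr tau x (ddr x) (tau' x)).
    - apply hr2; auto.
    - apply Htaud; auto.
    - specialize (Htaupos x ltac:(lra)); lra. }
  assert (Htau'id : forall x, 0 < x <= 1 -> tau' x = tau x * (df (r x) * s x - df x) / f x).
  { intros x Hx. specialize (Hfx x Hx). specialize (Hfr x Hx). unfold tau', s, tau.
    unfold Rsqr. field. split; lra. }
  assert (Hscw : cw (fun y => 0 < y <= 1) s 1).
  { apply lim_cw. unfold s, tau.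
    apply (limit_mul dr (fun x => / (f (r x) / f x))).
    - apply hdr_cont; lra.
    - apply (limit_inv (fun x => f (r x) / f x)).
      + apply (limit_mul (fun x => f (r x)) (fun x => / f x)).
        * apply (cw_lim _ (fun x => f (r x)) 1). apply cw_comp2; [apply rcw; lra|].
          apply (dpl_cont _ _ _ (fder (r 1) ltac:(apply Hrpos; lra))).
        * apply (limit_inv f).
          -- apply cw_lim, cont_cw, (dpl_cont _ _ _ (fder 1 ltac:(lra))).
          -- specialize (Hfx 1 ltac:(lra)); lra.
      + specialize (Htaupos 1 ltac:(lra)). unfold tau in Htaupos. lra. }
  split.
  - intros rho Hrho.
    set (A := b1 rho / b0 (r rho)).
    set (y := b0 rho / b1 (r rho)).
    set (Q := q1inv y).
    set (M := Rmax A Q).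
    apply Rnot_lt_le. intro Hgt. change (f (r rho) / f rho) with (tau rho) in Hgt.
    assert (HrhoL : 0 <= rho <= L) by lra.
    assert (HrrL : 0 <= r rho <= L) by (pose proof (Hrin rho Hrho); lra).
    assert (Hb0r : 0 < b0 (r rho)) by (pose proof (Hb0B _ HrrL); lra).
    assert (Hb1r : 1 <= b1 (r rho)) by (apply Hb11; auto).
    assert (Hb0rho : 0 < b0 rho) by (pose proof (Hb0B _ HrhoL); lra).
    assert (Hb1rho : 1 <= b1 rho) by (apply Hb11; auto).
    assert (Hb0rho1 : b0 rho <= 1) by (apply Hb01; auto).
    assert (Hb0r1 : b0 (r rho) <= 1) by (apply Hb01; auto).
    assert (HAe : A * b0 (r rho) = b1 rho) by (unfold A; field; lra).
    assert (HA1 : 1 <= A) by nra.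
    assert (Hy : 0 < y <= 1).
    { unfold y. split; [apply Rdiv_lt_0_compat; lra|].
      apply (Rmult_le_reg_r (b1 (r rho))); [lra|].
      replace (b0 rho / b1 (r rho) * b1 (r rho)) with (b0 rho) by (field; lra). lra. }
    destruct (hq1inv y Hy) as [HQ1 HQy]. fold Q in HQ1, HQy.
    assert (HMA : A <= M) by apply Rmax_l.
    assert (HMQ : Q <= M) by apply Rmax_r.
    assert (HsM : M < s rho).
    { specialize (Htaupos rho Hrho). unfold s.
      apply (Rmult_lt_reg_r (tau rho)); auto.
      replace (dr rho / tau rho * tau rho) with (dr rho) by (field; lra). lra. }
    assert (Hrho' : exists rho', 0 < rho' < 1 /\ rho' <= rho /\ M < s rho').
    { destruct (Req_dec rho 1) as [E|Hne].
      - subst rho. destruct (cw_near1 s M Hscw HsM) as [y' [Hy1 Hy2]]. exists y'; repeat split; lra.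
      - exists rho; repeat split; lra. }
    destruct Hrho' as [rho' [Hr1 [Hr2 Hr3]]].
    set (c := s rho'). assert (HcM : M < c) by exact Hr3.
    set (eps := b0 (r rho) * c - b1 rho).
    assert (Heps : 0 < eps). { unfold eps. assert (HAc : A < c) by (unfold c; lra). rewrite <- HAe. nra. }
    assert (Hbad : forall x, 0 < x <= rho' -> c <= s x -> ddr x < 0 /\ tau x * eps / f x <= tau' x).
    { intros x Hx Hcs.
      assert (Hx1 : 0 < x < 1) by lra.
      assert (Hxr : r x <= r rho).
      { destruct (Req_dec x rho) as [->|Hne]; [lra|]. left; apply Hrinc; lra. }
      pose proof (Hrin x ltac:(lra)) as Hrx.
      assert (Hdfx1 : df x <= b1 rho) by (apply Hb1ge; lra).
      assert (Hdfx0 : b0 rho <= df x) by (apply Hb0le; lra).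
      assert (Hdfr0 : b0 (r rho) <= df (r x)) by (apply Hb0le; lra).
      assert (Hdfr1 : df (r x) <= b1 (r rho)) by (apply Hb1ge; lra).
      set (sx := s x) in *.
      assert (Hsx1 : 1 < sx) by (unfold c in *; lra).
      assert (HsxQ : Q < sx) by (unfold c in *; lra).
      assert (Hgap : eps <= df (r x) * sx - df x).
      { unfold eps. assert (b0 (r rho) * c <= df (r x) * sx).
        { apply Rmult_le_compat; lra. }
        lra. }
      pose proof (Htaupos x ltac:(lra)) as HT.
      pose proof (Hfx x ltac:(lra)) as Hfx'.
      assert (HR : dr x = sx * tau x) by (unfold sx, s; field; lra).
      assert (Hterm1 : df (r x) * dphi (tau x) - df x * dphi (dr x) < 0).
      { rewrite HR. apply (bracket1 dphi t0 sx (tau x) (df (r x)) (df x) y (q1 sx)); auto; try lra.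
        - intros Ht. destruct (hq1_def sx ltac:(lra)) as [Hub _].
          assert (Hle : dphi (tau x) / dphi (sx * tau x) <= q1 sx).
          { apply Hub. exists (tau x); split; auto. }
          assert (Hp : 0 < dphi (sx * tau x)) by (apply Hdp; nra).
          apply (Rmult_le_compat_r (dphi (sx * tau x))) in Hle; [|lra].
          unfold Rdiv in Hle. rewrite Rmult_assoc, Rinv_l in Hle by lra. lra.
        - rewrite <- HQy. apply Hq1dec; lra.
        - assert (y * df (r x) <= y * b1 (r rho)) by (apply Rmult_le_compat_l; lra).
          assert (y * b1 (r rho) = b0 rho) by (unfold y; field; lra). lra. }
      assert (Hterm2 : 0 < df (r x) * dr x - df x * tau x).
      { rewrite HR. assert (0 < tau x * (df (r x) * sx - df x)) by (apply Rmult_lt_0_compat; lra).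
        nra. }
      split.
      - specialize (hode x Hx1). cbv zeta in hode.
        change (f (r x) / f x) with (tau x) in hode.
        apply (ode_sign_neg n (f x) (dr x) (tau x) (ddphi (dr x)) (ddh (dr x * tau x ^ (n - 1)))
                 (ddr x) (df (r x) * dphi (tau x) - df x * dphi (dr x))
                 (df (r x) * dr x - df x * tau x) hn Hfx'); auto.
        + apply Hddphi, hdr_pos; lra.
        + apply Hddh. apply Rmult_lt_0_compat; [apply hdr_pos; lra| apply pow_lt; auto].
        + apply hdr_pos; lra.
      - rewrite Htau'id by lra. fold sx. unfold Rdiv.
        apply Rmult_le_compat_r; [left; apply Rinv_0_lt_compat; auto|].
        apply Rmult_le_compat_l; lra. }
    assert (Hs'neg : forall x, 0 < x <= rho' -> c <= s x -> s' x < 0).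
    { intros x Hx Hcs. destruct (Hbad x Hx Hcs) as [Hd Ht].
      pose proof (Htaupos x ltac:(lra)) as HT. pose proof (Hfx x ltac:(lra)) as Hf'.
      pose proof (hdr_pos x ltac:(lra)) as HR.
      assert (0 < tau x * eps / f x) by (apply Rdiv_lt_0_compat; [apply Rmult_lt_0_compat|]; lra).
      unfold s'. unfold Rdiv.
      assert (Hn : ddr x * tau x - tau' x * dr x < 0) by nra.
      assert (0 < / (tau x)²) by (apply Rinv_0_lt_compat; unfold Rsqr; nra).
      nra. }
    assert (Hpers : forall x, 0 < x <= rho' -> c <= s x).
    { apply (persist s s' rho' c).
      - lra.
      - intros x Hx; apply Hsd; lra.
      - intros x Hx Hcs; apply Hs'neg; auto.
      - unfold c; lra. }
    assert (Hddr : forall x, 0 < x <= rho' -> ddr x < 0).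
    { intros x Hx. apply (Hbad x Hx (Hpers x Hx)). }
    set (m := dr rho').
    assert (Hm : 0 < m) by (apply hdr_pos; lra).
    assert (Hdrm : forall x, 0 < x <= rho' -> m <= dr x).
    { intros x Hx. destruct (Req_dec x rho') as [->|Hne]; [unfold m; lra|].
      destruct (mvt_cw dr ddr x rho' ltac:(lra)) as [cc [Hc1 Hc2]].
      - intros; apply hr2; lra.
      - intros z Hz. apply cont_cw, (dpl_cont _ _ _ (hr2 z ltac:(lra))).
      - assert (ddr cc < 0) by (apply Hddr; lra). unfold m. nra. }
    assert (Hrm : forall x, 0 < x <= rho' -> m * x <= r x).
    { intros x Hx. pose proof (lim_bound r r0 x m ltac:(lra) hr0) as H.
      assert (r0 + m * x <= r x); [|lra]. apply H.
      intros e He. destruct (mvt_cw r dr e x ltac:(lra)) as [cc [Hc1 Hc2]].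
      - intros; apply rder; lra.
      - intros; apply rcwab; lra.
      - assert (m <= dr cc) by (apply Hdrm; lra). nra. }
    set (Lb := B0 * m / C).
    assert (HLb : 0 < Lb) by (unfold Lb; apply Rdiv_lt_0_compat; [apply Rmult_lt_0_compat|]; lra).
    assert (Htaulb : forall x, 0 < x <= rho' -> Lb <= tau x).
    { intros x Hx. pose proof (Hfx x ltac:(lra)) as Hf'.
      pose proof (Hfb x ltac:(lra)) as [_ HfC].
      pose proof (Hfb (r x) (Hrin x ltac:(lra))) as [HfB _].
      pose proof (Hrm x Hx).
      unfold tau. apply (Rmult_le_reg_r (f x)); auto.
      replace (f (r x) / f x * f x) with (f (r x)) by (field; lra).
      assert (Lb * f x <= Lb * (C * x)) by (apply Rmult_le_compat_l; lra).
      assert (Lb * (C * x) = B0 * (m * x)) by (unfold Lb; field; lra).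
      assert (B0 * (m * x) <= B0 * r x) by (apply Rmult_le_compat_l; lra).
      lra. }
    apply (logblow tau tau' rho' (eps * Lb / C)); try lra.
    + apply Rdiv_lt_0_compat; [apply Rmult_lt_0_compat|]; lra.
    + intros x Hx; apply Htaud; lra.
    + intros x Hx. destruct (Hbad x Hx (Hpers x Hx)) as [_ Ht].
      pose proof (Hfx x ltac:(lra)) as Hf'.
      pose proof (Hfb x ltac:(lra)) as [_ HfC].
      pose proof (Htaulb x Hx).
      eapply Rle_trans; [|exact Ht].
      assert (eps * Lb / C / x = eps * Lb / (C * x)) by (field; lra).
      rewrite H0.
      apply Rle_trans with (eps * Lb / f x).
      * unfold Rdiv. apply Rmult_le_compat_l; [apply Rmult_le_pos; lra|].
        apply Rinv_le_contravar; lra.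
      * unfold Rdiv. apply Rmult_le_compat_r; [left; apply Rinv_0_lt_compat; lra|]. nra.
    + intros x Hx. pose proof (Htaupos x ltac:(lra)); lra.
  - intros [rho [Hrho Hlt]].
    change (f (r rho) / f rho) with (tau rho) in Hlt.
    destruct (Rlt_or_le 0 r0) as [ok|Hr0z]; auto. exfalso.
    assert (Hr0e : r0 = 0) by lra.
    set (A := b0 rho / b1 (r rho)).
    set (y := b1 rho / b0 (r rho)).
    set (Q := q0inv y).
    set (M := Rmin A Q).
    assert (Hlt' : dr rho < M * tau rho) by exact Hlt.
    assert (HrhoL : 0 <= rho <= L) by lra.
    assert (HrrL : 0 <= r rho <= L) by (pose proof (Hrin rho Hrho); lra).
    assert (Hb0r : 0 < b0 (r rho)) by (pose proof (Hb0B _ HrrL); lra).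
    assert (Hb1r : 1 <= b1 (r rho)) by (apply Hb11; auto).
    assert (Hb0rho : 0 < b0 rho) by (pose proof (Hb0B _ HrhoL); lra).
    assert (Hb1rho : 1 <= b1 rho) by (apply Hb11; auto).
    assert (Hb0rho1 : b0 rho <= 1) by (apply Hb01; auto).
    assert (Hb0r1 : b0 (r rho) <= 1) by (apply Hb01; auto).
    assert (HAe : A * b1 (r rho) = b0 rho) by (unfold A; field; lra).
    assert (Hye : y * b0 (r rho) = b1 rho) by (unfold y; field; lra).
    assert (Hy : 1 <= y) by nra.
    destruct (hq0inv y Hy) as [HQ HQy]. fold Q in HQ, HQy.
    assert (HMA : M <= A) by apply Rmin_l.
    assert (HMQ : M <= Q) by apply Rmin_r.
    assert (HsM : s rho < M).
    { specialize (Htaupos rho Hrho). unfold s.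
      apply (Rmult_lt_reg_r (tau rho)); auto.
      replace (dr rho / tau rho * tau rho) with (dr rho) by (field; lra). lra. }
    assert (Hrho' : exists rho', 0 < rho' < 1 /\ rho' <= rho /\ s rho' < M).
    { destruct (Req_dec rho 1) as [E|Hne].
      - subst rho.
        assert (Hc : continuity_pt Ropp (s 1)) by (apply (continuity_pt_opp (fun x => x)), derivable_continuous_pt, derivable_pt_id).
        destruct (cw_near1 (fun x => - s x) (- M) (cw_comp2 _ s Ropp 1 Hscw Hc) ltac:(lra)) as [y' [Hy1 Hy2]].
        exists y'; repeat split; lra.
      - exists rho; repeat split; lra. }
    destruct Hrho' as [rho' [Hr1 [Hr2 Hr3]]].
    set (c := s rho'). assert (HcM : c < M) by exact Hr3.
    assert (Hc0 : 0 < c).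
    { unfold c, s. apply Rdiv_lt_0_compat; [apply hdr_pos| apply Htaupos]; lra. }
    set (eps := b0 rho - c * b1 (r rho)).
    assert (Heps : 0 < eps). { unfold eps. assert (HAc : c < A) by lra. rewrite <- HAe. nra. }
    assert (Hbad : forall x, 0 < x <= rho' -> s x <= c -> 0 < ddr x /\ tau' x <= - (tau x * eps / f x)).
    { intros x Hx Hcs.
      assert (Hx1 : 0 < x < 1) by lra.
      assert (Hxr : r x <= r rho).
      { destruct (Req_dec x rho) as [->|Hne]; [lra|]. left; apply Hrinc; lra. }
      pose proof (Hrin x ltac:(lra)) as Hrx.
      assert (Hdfx1 : df x <= b1 rho) by (apply Hb1ge; lra).
      assert (Hdfx0 : b0 rho <= df x) by (apply Hb0le; lra).
      assert (Hdfr0 : b0 (r rho) <= df (r x)) by (apply Hb0le; lra).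
      assert (Hdfr1 : df (r x) <= b1 (r rho)) by (apply Hb1ge; lra).
      pose proof (Htaupos x ltac:(lra)) as HT.
      pose proof (Hfx x ltac:(lra)) as Hfx'.
      assert (Hsx0 : 0 < s x) by (unfold s; apply Rdiv_lt_0_compat; [apply hdr_pos; lra| auto]).
      set (sx := s x) in *.
      assert (Hsx1 : sx < 1) by lra.
      assert (HsxQ : sx < Q) by lra.
      assert (Hgap : df (r x) * sx - df x <= - eps).
      { unfold eps. assert (df (r x) * sx <= b1 (r rho) * c).
        { apply Rmult_le_compat; lra. }
        lra. }
      assert (HR : dr x = sx * tau x) by (unfold sx, s; field; lra).
      assert (Hterm1 : 0 < df (r x) * dphi (tau x) - df x * dphi (dr x)).
      { rewrite HR. apply (bracket2 dphi t0 sx (tau x) (df (r x)) (df x) y (q0 sx)); auto; try lra.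
        - intros Ht. destruct (hq0_def sx ltac:(lra)) as [Hlb _].
          assert (Hle : q0 sx <= dphi (tau x) / dphi (sx * tau x)).
          { apply Hlb. exists (tau x); split; auto.
            apply (Rmult_lt_reg_r sx); [lra|].
            replace (t0 / sx * sx) with t0 by (field; lra). lra. }
          assert (Hp : 0 < dphi (sx * tau x)) by (apply Hdp; lra).
          apply (Rmult_le_compat_r (dphi (sx * tau x))) in Hle; [|lra].
          replace (dphi (tau x) / dphi (sx * tau x) * dphi (sx * tau x)) with (dphi (tau x)) in Hle
            by (field; lra). lra.
        - rewrite <- HQy. apply Hq0dec; lra.
        - assert (y * b0 (r rho) <= y * df (r x)) by (apply Rmult_le_compat_l; lra). lra. }
      assert (Hterm2 : df (r x) * dr x - df x * tau x < 0).
      { rewrite HR. assert (tau x * (df (r x) * sx - df x) < 0).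
        { apply Rmult_lt_reg_l with (/ tau x); [apply Rinv_0_lt_compat; lra|].
          replace (/ tau x * (tau x * (df (r x) * sx - df x))) with (df (r x) * sx - df x) by (field; lra).
          lra. }
        nra. }
      split.
      - specialize (hode x Hx1). cbv zeta in hode.
        change (f (r x) / f x) with (tau x) in hode.
        apply (ode_sign_pos n (f x) (dr x) (tau x) (ddphi (dr x)) (ddh (dr x * tau x ^ (n - 1)))
                 (ddr x) (df (r x) * dphi (tau x) - df x * dphi (dr x))
                 (df (r x) * dr x - df x * tau x) hn Hfx'); auto.
        + apply Hddphi, hdr_pos; lra.
        + apply Hddh. apply Rmult_lt_0_compat; [apply hdr_pos; lra| apply pow_lt; auto].
        + apply hdr_pos; lra.
      - rewrite Htau'id by lra. fold sx.
        replace (- (tau x * eps / f x)) with (tau x * (- eps) / f x) by (field; lra).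
        unfold Rdiv.
        apply Rmult_le_compat_r; [left; apply Rinv_0_lt_compat; auto|].
        apply Rmult_le_compat_l; lra. }
    assert (Hs'pos : forall x, 0 < x <= rho' -> s x <= c -> 0 < s' x).
    { intros x Hx Hcs. destruct (Hbad x Hx Hcs) as [Hd Ht].
      pose proof (Htaupos x ltac:(lra)) as HT. pose proof (Hfx x ltac:(lra)) as Hf'.
      pose proof (hdr_pos x ltac:(lra)) as HR.
      assert (0 < tau x * eps / f x) by (apply Rdiv_lt_0_compat; [apply Rmult_lt_0_compat|]; lra).
      unfold s'. unfold Rdiv.
      assert (Hn : 0 < ddr x * tau x - tau' x * dr x) by nra.
      assert (0 < / (tau x)²) by (apply Rinv_0_lt_compat; unfold Rsqr; nra).
      nra. }
    assert (Hpers : forall x, 0 < x <= rho' -> s x <= c).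
    { intros x Hx.
      assert (- c <= - s x); [|lra].
      apply (persist (fun x => - s x) (fun x => - s' x) rho' (- c)); auto.
      - lra.
      - intros z Hz. apply derivable_pt_lim_opp, Hsd; lra.
      - intros z Hz Hcs. assert (0 < s' z) by (apply Hs'pos; lra). lra.
      - unfold c; lra. }
    assert (Hddr : forall x, 0 < x <= rho' -> 0 < ddr x).
    { intros x Hx. apply (Hbad x Hx (Hpers x Hx)). }
    set (m := dr rho').
    assert (Hm : 0 < m) by (apply hdr_pos; lra).
    assert (Hdrm : forall x, 0 < x <= rho' -> dr x <= m).
    { intros x Hx. destruct (Req_dec x rho') as [->|Hne]; [unfold m; lra|].
      destruct (mvt_cw dr ddr x rho' ltac:(lra)) as [cc [Hc1 Hc2]].
      - intros; apply hr2; lra.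
      - intros z Hz. apply cont_cw, (dpl_cont _ _ _ (hr2 z ltac:(lra))).
      - assert (0 < ddr cc) by (apply Hddr; lra). unfold m. nra. }
    assert (Hrm : forall x, 0 < x <= rho' -> r x <= m * x).
    { intros x Hx.
      pose proof (lim_bound (fun y => - r y) (- r0) x (- m) ltac:(lra) (limit_Ropp r _ r0 0 hr0)) as H.
      assert (- r0 + - m * x <= - r x); [|lra]. apply H.
      intros e He. destruct (mvt_cw r dr e x ltac:(lra)) as [cc [Hc1 Hc2]].
      - intros; apply rder; lra.
      - intros; apply rcwab; lra.
      - assert (dr cc <= m) by (apply Hdrm; lra). nra. }
    set (Ub := C * m / B0).
    assert (Htauub : forall x, 0 < x <= rho' -> tau x <= Ub).
    { intros x Hx. pose proof (Hfx x ltac:(lra)) as Hf'.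
      pose proof (Hfb x ltac:(lra)) as [HfB _].
      pose proof (Hfb (r x) (Hrin x ltac:(lra))) as [_ HfC].
      pose proof (Hrm x Hx).
      unfold tau. apply (Rmult_le_reg_r (f x)); auto.
      replace (f (r x) / f x * f x) with (f (r x)) by (field; lra).
      assert (Ub * (B0 * x) <= Ub * f x).
      { apply Rmult_le_compat_l; [unfold Ub; apply Rmult_le_pos; [nra| left; apply Rinv_0_lt_compat; lra]| lra]. }
      assert (Ub * (B0 * x) = C * (m * x)) by (unfold Ub; field; lra).
      assert (C * r x <= C * (m * x)) by (apply Rmult_le_compat_l; lra).
      lra. }
    set (T2 := tau rho').
    assert (HT2 : 0 < T2) by (apply Htaupos; lra).
    assert (Htau2 : forall x, 0 < x <= rho' -> T2 <= tau x).
    { intros x Hx. destruct (Req_dec x rho') as [->|Hne]; [unfold T2; lra|].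
      destruct (mvt_cw tau tau' x rho' ltac:(lra)) as [cc [Hc1 Hc2]].
      - intros; apply Htaud; lra.
      - intros z Hz. apply cont_cw, (dpl_cont _ _ _ (Htaud z ltac:(lra))).
      - destruct (Hbad cc ltac:(lra) (Hpers cc ltac:(lra))) as [_ Ht].
        assert (0 < tau cc * eps / f cc).
        { apply Rdiv_lt_0_compat; [apply Rmult_lt_0_compat; [apply Htaupos; lra| lra]| apply Hfx; lra]. }
        unfold T2. nra. }
    apply (logblow (fun x => Ub - tau x) (fun x => - tau' x) rho' (eps * T2 / C)); try lra.
    + apply Rdiv_lt_0_compat; [apply Rmult_lt_0_compat|]; lra.
    + intros x Hx. apply dpl_eq with (0 - tau' x); [|ring].
      apply (derivable_pt_lim_minus (fun _ => Ub) tau). apply derivable_pt_lim_const.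
      apply Htaud; lra.
    + intros x Hx. destruct (Hbad x Hx (Hpers x Hx)) as [_ Ht].
      pose proof (Hfx x ltac:(lra)) as Hf'.
      pose proof (Hfb x ltac:(lra)) as [_ HfC].
      pose proof (Htau2 x Hx).
      apply Rle_trans with (tau x * eps / f x); [|lra].
      assert (eps * T2 / C / x = eps * T2 / (C * x)) by (field; lra).
      rewrite H0.
      apply Rle_trans with (eps * T2 / f x).
      * unfold Rdiv. apply Rmult_le_compat_l; [apply Rmult_le_pos; lra|].
        apply Rinv_le_contravar; lra.
      * unfold Rdiv. apply Rmult_le_compat_r; [left; apply Rinv_0_lt_compat; lra|]. nra.
    + intros x Hx. pose proof (Htauub x Hx); lra.
Qed.
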